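(* Let $m\ge n\ge1$ and let $G=(g_1,\dots,g_m):\mathbb{B}^n\to\mathbb{B}^m$ be a proper holomorphic map with $G(0)=0$. Define $H_G=\big(g_1,\dots,g_{m-1},\frac{P_m}{Q},\frac{P_{m+1}}{Q}\big)$ where $P_m=\frac12\sum_{i=1}^{m-1}g_i^2-g_m^2+g_m$, $P_{m+1}=\sqrt{-1}\big(\frac12\sum_{i=1}^{m-1}g_i^2+g_m^2-g_m\big)$, $Q=\sqrt2(1-g_m)$, and $W_G=\big(g_1,\dots,g_m,1-\sqrt{1-\sum_{j=1}^mg_j^2}\big)$ (branch with $\sqrt1=1$). Then for $\Phi\in\{H_G,W_G\}$ one has $1-\Phi\overline{\Phi}^t+\frac14|\Phi\Phi^t|^2=1-\sum_{i=1}^m|g_i|^2$ on $\mathbb{B}^n$, and both $H_G$ and $W_G$ are proper holomorphic maps from $\mathbb{B}^n$ to $D^{IV}_{m+1}$.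
   Context: $\mathbb{B}^n=\{z\in\mathbb{C}^n:|z|^2<1\}$; $D^{IV}_k=\{Z\in\mathbb{C}^k: Z\overline{Z}^t<2,\ 1-Z\overline{Z}^t+\tfrac14|ZZ^t|^2>0\}$ (row vectors). Proper means preimages of compact sets are compact. *)

(* Defs.v *)
From Stdlib Require Import Reals Lra List.
Open Scope R_scope.

Record C : Type := mkC { Re : R; Im : R }.

Definition C0 : C := mkC 0 0.
Definition C1 : C := mkC 1 0.
Definition Ci : C := mkC 0 1.
Definition RtoC (r : R) : C := mkC r 0.
Definition Cadd (z w : C) : C := mkC (Re z + Re w) (Im z + Im w).
Definition Copp (z : C) : C := mkC (- Re z) (- Im z).
Definition Csub (z w : C) : C := Cadd z (Copp w).
Definition Cmul (z w : C) : C :=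
  mkC (Re z * Re w - Im z * Im w) (Re z * Im w + Im z * Re w).
Definition Cconj (z : C) : C := mkC (Re z) (- Im z).
Definition Cnorm2 (z : C) : R := Re z * Re z + Im z * Im z.
Definition Cabs (z : C) : R := sqrt (Cnorm2 z).
Definition Cinv (z : C) : C := mkC (Re z / Cnorm2 z) (- Im z / Cnorm2 z).
Definition Cdiv (z w : C) : C := Cmul z (Cinv w).
(** principal square root (branch with sqrt 1 = 1, cut along the negative reals) *)
Definition Csqrt (z : C) : C :=
  mkC (sqrt ((Cabs z + Re z) / 2))
      ((if Rlt_dec (Im z) 0 then -1 else 1) * sqrt ((Cabs z - Re z) / 2)).

Fixpoint sumR (k : nat) (f : nat -> R) : R :=
  match k with O => 0 | S k' => sumR k' f + f k' end.
Fixpoint sumC (k : nat) (f : nat -> C) : C :=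
  match k with O => C0 | S k' => Cadd (sumC k' f) (f k') end.

(** * The space C^k: points are functions nat -> C vanishing from index k on
    (coordinate z_{i+1} of the paper is [z i]). *)
Definition pt := nat -> C.
Definition inC (k : nat) (x : pt) : Prop := forall i, (k <= i)%nat -> x i = C0.
Definition zero_pt : pt := fun _ => C0.
Definition vnorm2 (k : nat) (x : pt) : R := sumR k (fun i => Cnorm2 (x i)).
Definition dist (k : nat) (x y : pt) : R := sqrt (vnorm2 k (fun i => Csub (x i) (y i))).

Definition ball (k : nat) (z : pt) : Prop := inC k z /\ vnorm2 k z < 1.

Definition ivform (k : nat) (Z : pt) : R :=
  1 - vnorm2 k Z + / 4 * Cnorm2 (sumC k (fun i => Cmul (Z i) (Z i))).
Definition DIV (k : nat) (Z : pt) : Prop :=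
  inC k Z /\ vnorm2 k Z < 2 /\ ivform k Z > 0.

Definition open_in (k : nat) (U : pt -> Prop) : Prop :=
  forall x, inC k x -> U x ->
    exists eps, eps > 0 /\ forall y, inC k y -> dist k x y < eps -> U y.
Definition compact (k : nat) (K : pt -> Prop) : Prop :=
  (forall x, K x -> inC k x) /\
  forall (I : Type) (U : I -> pt -> Prop),
    (forall i, open_in k (U i)) ->
    (forall x, K x -> exists i, U i x) ->
    exists l : list I, forall x, K x -> exists i, In i l /\ U i x.

Definition holomorphic_on (n k : nat) (D : pt -> Prop) (F : pt -> pt) : Prop :=
  forall z, D z ->
    exists A : nat -> nat -> C,
      forall eps, eps > 0 -> exists delta, delta > 0 /\
        forall h, inC n h -> sqrt (vnorm2 n h) < delta ->
          sqrt (vnorm2 k (fun i =>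
              Csub (Csub (F (fun j => Cadd (z j) (h j)) i) (F z i))
                   (sumC n (fun j => Cmul (A i j) (h j)))))
          <= eps * sqrt (vnorm2 n h).

Definition maps_into (D E : pt -> Prop) (F : pt -> pt) : Prop :=
  forall z, D z -> E (F z).

Definition proper_map (n k : nat) (D E : pt -> Prop) (F : pt -> pt) : Prop :=
  forall K, compact k K -> (forall w, K w -> E w) ->
    compact n (fun z => D z /\ K (F z)).

Definition proper_holomorphic (n k : nat) (E : pt -> Prop) (F : pt -> pt) : Prop :=
  holomorphic_on n k (ball n) F /\ maps_into (ball n) E F /\
  proper_map n k (ball n) E F.

Definition sq (z : C) : C := Cmul z z.
Definition half : C := RtoC (/ 2).

Definition H_map (m : nat) (G : pt -> pt) : pt -> pt := fun z i =>
  let g := G z in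
  let s := sumC (m - 1) (fun j => sq (g j)) in
  let gm := g (m - 1)%nat in
  let Pm := Cadd (Csub (Cmul half s) (sq gm)) gm in
  let Pm1 := Cmul Ci (Csub (Cadd (Cmul half s) (sq gm)) gm) in
  let Q := Cmul (RtoC (sqrt 2)) (Csub C1 gm) in
  if (i <? m - 1)%nat then g i
  else if (i =? m - 1)%nat then Cdiv Pm Q
  else if (i =? m)%nat then Cdiv Pm1 Q
  else C0.

Definition W_map (m : nat) (G : pt -> pt) : pt -> pt := fun z i =>
  let g := G z in
  if (i <? m)%nat then g i
  else if (i =? m)%nat then
    Csub C1 (Csqrt (Csub C1 (sumC m (fun j => sq (g j)))))
  else C0.

(* Main.v *)
Require Import Defs.
From Stdlib Require Import Reals Lra Lia Psatz List Field Ring ZArith.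
From Stdlib Require Import FunctionalExtensionality ClassicalEpsilon Classical.
Import Defs.
Open Scope R_scope.

Lemma C_ext (x y : C) : Re x = Re y -> Im x = Im y -> x = y.
Proof. destruct x, y; simpl; intros; subst; reflexivity. Qed.

Ltac Cext := apply C_ext; simpl.

Lemma C_ring : ring_theory C0 C1 Cadd Cmul Csub Copp (@eq C).
Proof.
  constructor; intros; unfold Cadd, Cmul, Csub, Copp, C0, C1; Cext; ring.
Qed.

Lemma C1_neq_C0 : C1 <> C0.
Proof. intro H. assert (Re C1 = Re C0) by (rewrite H; auto). simpl in H0. lra. Qed.

Lemma Cnorm2_ge0 z : 0 <= Cnorm2 z.
Proof. unfold Cnorm2; nra. Qed.

Lemma Cnorm2_pos z : z <> C0 -> 0 < Cnorm2 z.
Proof.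
  intro H. destruct z as [a b]; unfold Cnorm2; simpl.
  destruct (Req_dec a 0); destruct (Req_dec b 0); subst; try nra.
  exfalso; apply H; reflexivity.
Qed.

Lemma Cnorm2_eq0 z : Cnorm2 z = 0 -> z = C0.
Proof.
  destruct z as [a b]; unfold Cnorm2; simpl; intros.
  apply C_ext; simpl; nra.
Qed.

Lemma C_field : field_theory C0 C1 Cadd Cmul Csub Copp Cdiv Cinv (@eq C).
Proof.
  constructor.
  - exact C_ring.
  - exact C1_neq_C0.
  - reflexivity.
  - intros p Hp. apply Cnorm2_pos in Hp. unfold Cinv, Cmul, C1, Cnorm2 in *.
    destruct p as [a b]; simpl in *. Cext; field; lra.
Qed.

Add Field Cfield : C_field.

Lemma Cnorm2_mul x y : Cnorm2 (Cmul x y) = Cnorm2 x * Cnorm2 y.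
Proof. unfold Cnorm2, Cmul; simpl; ring. Qed.

Lemma Cnorm2_inv x : x <> C0 -> Cnorm2 (Cinv x) = / Cnorm2 x.
Proof. intro H. apply Cnorm2_pos in H. destruct x as [a b]. unfold Cinv; simpl.
  unfold Cnorm2 in *; simpl in *. field. lra. Qed.

Lemma Cabs_ge0 z : 0 <= Cabs z.
Proof. apply sqrt_pos. Qed.

Lemma Cabs_sq z : Cabs z * Cabs z = Cnorm2 z.
Proof. apply sqrt_sqrt, Cnorm2_ge0. Qed.

Lemma Cabs_mul x y : Cabs (Cmul x y) = Cabs x * Cabs y.
Proof. unfold Cabs; rewrite Cnorm2_mul; apply sqrt_mult; apply Cnorm2_ge0. Qed.

Lemma Cabs_C0 : Cabs C0 = 0.
Proof. unfold Cabs, Cnorm2; simpl. replace (0*0+0*0) with 0 by ring. apply sqrt_0. Qed.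

Lemma le_sqrt_of_sq a b : 0 <= b -> a*a <= b*b -> sqrt (a*a) <= b.
Proof. intros. rewrite <- (sqrt_square b) by auto. apply sqrt_le_1_alt. auto. Qed.

Lemma Cabs_triangle x y : Cabs (Cadd x y) <= Cabs x + Cabs y.
Proof.
  unfold Cabs. rewrite <- (sqrt_square (sqrt (Cnorm2 x) + sqrt (Cnorm2 y))).
  2: { pose proof (sqrt_pos (Cnorm2 x)); pose proof (sqrt_pos (Cnorm2 y)); lra. }
  apply sqrt_le_1_alt.
  pose proof (sqrt_sqrt _ (Cnorm2_ge0 x)). pose proof (sqrt_sqrt _ (Cnorm2_ge0 y)).
  pose proof (sqrt_pos (Cnorm2 x)); pose proof (sqrt_pos (Cnorm2 y)).
  set (a := sqrt (Cnorm2 x)) in *. set (b := sqrt (Cnorm2 y)) in *.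
  assert (Hcs : Re x * Re y + Im x * Im y <= a * b).
  { assert ((Re x * Re y + Im x * Im y)^2 <= (a*b)^2).
    { replace ((a*b)^2) with ((a*a)*(b*b)) by ring. rewrite H, H0. unfold Cnorm2.
      pose proof (pow2_ge_0 (Re x * Im y - Im x * Re y)). simpl. nra. }
    destruct (Rle_dec (Re x * Re y + Im x * Im y) 0). nra.
    apply Rsqr_incr_0_var. unfold Rsqr. nra. nra. }
  unfold Cnorm2 in *; simpl. nra.
Qed.

Lemma Cabs_sub_tri x y : Cabs (Csub x y) <= Cabs x + Cabs y.
Proof.
  unfold Csub. eapply Rle_trans. apply Cabs_triangle.
  replace (Cabs (Copp y)) with (Cabs y). lra. unfold Cabs, Cnorm2; simpl. f_equal; ring.
Qed.

Lemma Cabs_opp y : Cabs (Copp y) = Cabs y.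
Proof. unfold Cabs, Cnorm2; simpl. f_equal; ring. Qed.

Lemma Cabs_Re z : Rabs (Re z) <= Cabs z.
Proof.
  unfold Cabs. rewrite <- sqrt_Rsqr_abs. apply sqrt_le_1_alt. unfold Rsqr, Cnorm2. nra.
Qed.
Lemma Cabs_Im z : Rabs (Im z) <= Cabs z.
Proof.
  unfold Cabs. rewrite <- sqrt_Rsqr_abs. apply sqrt_le_1_alt. unfold Rsqr, Cnorm2. nra.
Qed.
Lemma sumR_ext k f g : (forall i, (i < k)%nat -> f i = g i) -> sumR k f = sumR k g.
Proof. induction k; simpl; intros; auto. rewrite IHk by (intros; apply H; lia). rewrite H by lia. auto. Qed.
Lemma sumC_ext k f g : (forall i, (i < k)%nat -> f i = g i) -> sumC k f = sumC k g.
Proof. induction k; simpl; intros; auto. rewrite IHk by (intros; apply H; lia). rewrite H by lia. auto. Qed.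
Lemma sumR_ge0 k f : (forall i, (i < k)%nat -> 0 <= f i) -> 0 <= sumR k f.
Proof. induction k; simpl; intros. lra. pose proof (H k). assert (0 <= sumR k f) by (apply IHk; intros; apply H; lia). specialize (H0 ltac:(lia)). lra. Qed.
Lemma sumR_le k f g : (forall i, (i < k)%nat -> f i <= g i) -> sumR k f <= sumR k g.
Proof. induction k; simpl; intros. lra. assert (sumR k f <= sumR k g) by (apply IHk; intros; apply H; lia). specialize (H k ltac:(lia)). lra. Qed.
Lemma sumR_plus k f g : sumR k (fun i => f i + g i) = sumR k f + sumR k g.
Proof. induction k; simpl. ring. rewrite IHk. ring. Qed.
Lemma sumR_scal k c f : sumR k (fun i => c * f i) = c * sumR k f.
Proof. induction k; simpl. ring. rewrite IHk. ring. Qed.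
Lemma Re_sumC k f : Re (sumC k f) = sumR k (fun i => Re (f i)).
Proof. induction k; simpl; auto. rewrite IHk; auto. Qed.
Lemma Im_sumC k f : Im (sumC k f) = sumR k (fun i => Im (f i)).
Proof. induction k; simpl; auto. rewrite IHk; auto. Qed.
Lemma Cabs_sumC k f : Cabs (sumC k f) <= sumR k (fun i => Cabs (f i)).
Proof. induction k; simpl. rewrite Cabs_C0; lra. eapply Rle_trans. apply Cabs_triangle. lra. Qed.
Lemma vnorm2_ge0 k x : 0 <= vnorm2 k x.
Proof. apply sumR_ge0. intros; apply Cnorm2_ge0. Qed.
Lemma Cnorm2_le_vnorm2 k x i : (i < k)%nat -> Cnorm2 (x i) <= vnorm2 k x.
Proof.
  unfold vnorm2. induction k; simpl; intros. lia.
  destruct (Nat.eq_dec i k). subst. pose proof (vnorm2_ge0 k x). unfold vnorm2 in H0. lra.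
  pose proof (IHk ltac:(lia)). pose proof (Cnorm2_ge0 (x k)). lra.
Qed.
Lemma Cabs_le_norm k x i : (i < k)%nat -> Cabs (x i) <= sqrt (vnorm2 k x).
Proof. intros. apply sqrt_le_1_alt. apply Cnorm2_le_vnorm2; auto. Qed.
Lemma sqrt_sum_le k f : sqrt (sumR k (fun i => Cnorm2 (f i))) <= sumR k (fun i => Cabs (f i)).
Proof.
  assert (Hs : sumR k (fun i => Cnorm2 (f i)) <= sumR k (fun i => Cabs (f i)) * sumR k (fun i => Cabs (f i))
            /\ 0 <= sumR k (fun i => Cabs (f i))).
  { induction k; simpl. lra. destruct IHk. pose proof (Cabs_sq (f k)). pose proof (Cabs_ge0 (f k)). nra. }
  destruct Hs. rewrite <- (sqrt_square (sumR k (fun i => Cabs (f i)))) by auto.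
  apply sqrt_le_1_alt; auto.
Qed.

Definition lin (n : nat) (a : nat -> C) (h : pt) : C := sumC n (fun j => Cmul (a j) (h j)).
Definition nrm (n : nat) (h : pt) : R := sqrt (vnorm2 n h).
Definition cnst (n : nat) (a : nat -> C) : R := sumR n (fun j => Cabs (a j)).

Lemma nrm_ge0 n h : 0 <= nrm n h.
Proof. apply sqrt_pos. Qed.
Lemma cnst_ge0 n a : 0 <= cnst n a.
Proof. apply sumR_ge0; intros; apply Cabs_ge0. Qed.

Lemma lin_bound n a h : Cabs (lin n a h) <= cnst n a * nrm n h.
Proof.
  unfold lin, cnst. eapply Rle_trans. apply Cabs_sumC.
  rewrite (Rmult_comm (sumR _ _)).
  rewrite <- (sumR_scal n (nrm n h)). apply sumR_le. intros.
  rewrite Cabs_mul. rewrite (Rmult_comm (nrm n h)). apply Rmult_le_compat_l. apply Cabs_ge0.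
  apply Cabs_le_norm; auto.
Qed.

Lemma lin_add n a b h : lin n (fun j => Cadd (a j) (b j)) h = Cadd (lin n a h) (lin n b h).
Proof. unfold lin; induction n; simpl. Cext; ring. rewrite IHn. field. Qed.
Lemma lin_scal n d a h : lin n (fun j => Cmul d (a j)) h = Cmul d (lin n a h).
Proof. unfold lin; induction n; simpl. Cext; ring. rewrite IHn. field. Qed.
Lemma lin_zero n h : lin n (fun _ => C0) h = C0.
Proof. unfold lin; induction n; simpl. auto. rewrite IHn. field. Qed.
Definition dif (n : nat) (f : pt -> C) (z : pt) (a : nat -> C) : Prop :=
  forall eps, eps > 0 -> exists delta, delta > 0 /\ forall h, inC n h -> nrm n h < delta ->
    Cabs (Csub (Csub (f (fun j => Cadd (z j) (h j))) (f z)) (lin n a h)) <= eps * nrm n h.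
Definition difE n f z := exists a, dif n f z a.
Definition dif1 (phi : C -> C) (w d : C) : Prop :=
  forall eps, eps > 0 -> exists delta, delta > 0 /\ forall k, Cabs k < delta ->
    Cabs (Csub (Csub (phi (Cadd w k)) (phi w)) (Cmul d k)) <= eps * Cabs k.

Lemma Cabs_split x y : Cabs x <= Cabs (Csub x y) + Cabs y.
Proof. replace x with (Cadd (Csub x y) y) at 1 by field. apply Cabs_triangle. Qed.

Lemma frac_le1 M : 0 <= M -> M / (M+1) <= 1.
Proof. intros. replace (M/(M+1)) with (1 - 1/(M+1)) by (field; lra).
  assert (0 < 1/(M+1)) by (apply Rdiv_lt_0_compat; lra). lra. Qed.

Lemma dif_bound n f z a : dif n f z a -> exists delta, delta > 0 /\ forall h, inC n h -> nrm n h < delta ->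
   Cabs (Csub (f (fun j => Cadd (z j) (h j))) (f z)) <= (1 + cnst n a) * nrm n h.
Proof.
  intros D. destruct (D 1 ltac:(lra)) as [d [Hd Hh]]. exists d; split; auto. intros.
  eapply Rle_trans. apply (Cabs_split _ (lin n a h)). pose proof (Hh h H H0).
  pose proof (lin_bound n a h). lra.
Qed.

Lemma dif_const n c z : dif n (fun _ => c) z (fun _ => C0).
Proof.
  intros eps He. exists 1; split. lra. intros. rewrite lin_zero.
  replace (Csub (Csub c c) C0) with C0 by field. rewrite Cabs_C0.
  pose proof (nrm_ge0 n h). nra.
Qed.

Lemma dif_add n f g z a b : dif n f z a -> dif n g z b ->
  dif n (fun x => Cadd (f x) (g x)) z (fun j => Cadd (a j) (b j)).
Proof.
  intros Df Dg eps He. destruct (Df (eps/2) ltac:(lra)) as [d1 [H1 F1]].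
  destruct (Dg (eps/2) ltac:(lra)) as [d2 [H2 F2]].
  exists (Rmin d1 d2); split. apply Rmin_pos; auto. intros h Hh Hn.
  rewrite lin_add.
  match goal with |- Cabs ?E <= _ => replace E with
    (Cadd (Csub (Csub (f (fun j => Cadd (z j) (h j))) (f z)) (lin n a h))
          (Csub (Csub (g (fun j => Cadd (z j) (h j))) (g z)) (lin n b h))) by field end.
  eapply Rle_trans. apply Cabs_triangle.
  pose proof (F1 h Hh (Rlt_le_trans _ _ _ Hn (Rmin_l _ _))).
  pose proof (F2 h Hh (Rlt_le_trans _ _ _ Hn (Rmin_r _ _))). lra.
Qed.

Lemma dif_chain n f z a phi d : dif n f z a -> dif1 phi (f z) d ->
  dif n (fun x => phi (f x)) z (fun j => Cmul d (a j)).
Proof.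
  intros Df Dp eps He.
  set (M := cnst n a). assert (HM : 0 <= M) by apply cnst_ge0.
  set (e2 := Rmin 1 (eps / (2 * (Cabs d + 1)))).
  assert (He2 : 0 < e2). { apply Rmin_pos. lra. pose proof (Cabs_ge0 d).
    apply Rdiv_lt_0_compat; lra. }
  destruct (Df e2 He2) as [d2 [Hd2 F2]].
  set (e1 := eps / (2 * (1 + M))).
  assert (He1 : 0 < e1) by (apply Rdiv_lt_0_compat; lra).
  destruct (Dp e1 He1) as [d1 [Hd1 F1]].
  exists (Rmin d2 (d1 / (1 + M))). split. apply Rmin_pos; auto. apply Rdiv_lt_0_compat; lra.
  intros h Hh Hn.
  assert (Hn2 : nrm n h < d2) by (eapply Rlt_le_trans; [exact Hn| apply Rmin_l]).
  assert (Hn1 : nrm n h < d1 / (1+M)) by (eapply Rlt_le_trans; [exact Hn| apply Rmin_r]).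
  rewrite lin_scal.
  set (w := f z) in *. set (F := f (fun j => Cadd (z j) (h j))).
  set (k := Csub F w). set (L := lin n a h).
  pose proof (F2 h Hh Hn2) as B2. fold F L w in B2. fold k in B2.
  pose proof (lin_bound n a h) as BL. fold L M in BL.
  pose proof (nrm_ge0 n h) as Hnn.
  assert (e2le : e2 <= 1) by apply Rmin_l.
  assert (Bk : Cabs k <= (1 + M) * nrm n h).
  { eapply Rle_trans. apply (Cabs_split k L). nra. }
  assert (Bk1 : Cabs k < d1).
  { apply (Rmult_lt_compat_l (1+M)) in Hn1; [|lra].
    replace ((1 + M) * (d1 / (1 + M))) with d1 in Hn1 by (field; lra). lra. }
  pose proof (F1 k Bk1) as B1.
  replace F with (Cadd w k) by (unfold k; field).
  match goal with |- Cabs ?E <= _ => replace E with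
    (Cadd (Csub (Csub (phi (Cadd w k)) (phi w)) (Cmul d k)) (Cmul d (Csub k L))) by field end.
  eapply Rle_trans. apply Cabs_triangle. rewrite Cabs_mul.
  assert (e2le' : e2 <= eps / (2 * (Cabs d + 1))) by apply Rmin_r.
  pose proof (Cabs_ge0 d).
  assert (X1 : e1 * Cabs k <= eps / 2 * nrm n h).
  { apply Rle_trans with (e1 * ((1+M) * nrm n h)). apply Rmult_le_compat_l; lra.
    unfold e1. right. field. lra. }
  assert (X2 : Cabs d * Cabs (Csub k L) <= eps / 2 * nrm n h).
  { apply Rle_trans with (Cabs d * (e2 * nrm n h)). apply Rmult_le_compat_l; lra.
    apply Rle_trans with (Cabs d * (eps / (2 * (Cabs d + 1)) * nrm n h)).
    apply Rmult_le_compat_l; auto. apply Rmult_le_compat_r; auto.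
    replace (Cabs d * (eps / (2 * (Cabs d + 1)) * nrm n h)) with
      ((Cabs d / (Cabs d + 1)) * (eps / 2 * nrm n h)) by (field; lra).
    rewrite <- (Rmult_1_l (eps/2 * nrm n h)) at 2. apply Rmult_le_compat_r. nra.
    apply frac_le1; lra. }
  lra.
Qed.

Lemma difE_ext n f g z : (forall x, f x = g x) -> difE n f z -> difE n g z.
Proof. intros H. replace g with f. auto. apply functional_extensionality; auto. Qed.

Lemma difE_const n c z : difE n (fun _ => c) z.
Proof. eexists; apply dif_const. Qed.
Lemma difE_add n f g z : difE n f z -> difE n g z -> difE n (fun x => Cadd (f x) (g x)) z.
Proof. intros [a Ha] [b Hb]. eexists; apply dif_add; eauto. Qed.
Lemma difE_chain n f z phi d : difE n f z -> dif1 phi (f z) d -> difE n (fun x => phi (f x)) z.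
Proof. intros [a Ha] Hp. eexists; eapply dif_chain; eauto. Qed.

Lemma dif1_quad phi w d : (exists M delta, 0 <= M /\ delta > 0 /\ forall k, Cabs k < delta ->
   Cabs (Csub (Csub (phi (Cadd w k)) (phi w)) (Cmul d k)) <= M * Cabs k * Cabs k) -> dif1 phi w d.
Proof.
  intros [M [d0 [HM [Hd0 F]]]] eps He. exists (Rmin d0 (eps / (M + 1))). split.
  apply Rmin_pos; auto. apply Rdiv_lt_0_compat; lra.
  intros k Hk. pose proof (F k (Rlt_le_trans _ _ _ Hk (Rmin_l _ _))).
  assert (Hk2 : Cabs k < eps / (M+1)) by (eapply Rlt_le_trans; [exact Hk|apply Rmin_r]).
  pose proof (Cabs_ge0 k).
  apply Rle_trans with (M * Cabs k * Cabs k); auto.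
  apply Rmult_le_compat_r; auto.
  apply Rle_trans with (M * (eps / (M+1))). apply Rmult_le_compat_l; lra.
  replace (M * (eps / (M + 1))) with ((M / (M+1)) * eps) by (field; lra).
  rewrite <- (Rmult_1_l eps) at 2. apply Rmult_le_compat_r. lra.
  apply frac_le1; lra.
Qed.
Lemma Cabs_inv x : x <> C0 -> Cabs (Cinv x) = / Cabs x.
Proof. intros. unfold Cabs. rewrite Cnorm2_inv by auto. apply sqrt_inv. Qed.
Lemma Cabs_div x y : y <> C0 -> Cabs (Cdiv x y) = Cabs x / Cabs y.
Proof. intros. unfold Cdiv. rewrite Cabs_mul, Cabs_inv by auto. reflexivity. Qed.
Lemma Cabs_pos x : x <> C0 -> 0 < Cabs x.
Proof. intros. apply sqrt_lt_R0. apply Cnorm2_pos; auto. Qed.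
Lemma Cabs_neq0 x : 0 < Cabs x -> x <> C0.
Proof. intros H E. subst. rewrite Cabs_C0 in H. lra. Qed.
Lemma C2_abs : Cabs (Cadd C1 C1) = 2.
Proof. unfold Cabs, Cnorm2; simpl. replace ((1+1)*(1+1)+(0+0)*(0+0)) with (2*2) by ring. apply sqrt_square; lra. Qed.

Lemma dif1_scal c w : dif1 (fun x => Cmul c x) w c.
Proof.
  apply dif1_quad. exists 0, 1. split. lra. split. lra. intros.
  replace (Csub (Csub (Cmul c (Cadd w k)) (Cmul c w)) (Cmul c k)) with C0 by field.
  rewrite Cabs_C0. lra.
Qed.

Lemma dif1_sq w : dif1 (fun x => Cmul x x) w (Cmul (Cadd C1 C1) w).
Proof.
  apply dif1_quad. exists 1, 1. split. lra. split. lra. intros.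
  replace (Csub (Csub (Cmul (Cadd w k) (Cadd w k)) (Cmul w w)) (Cmul (Cmul (Cadd C1 C1) w) k))
    with (Cmul k k) by field. rewrite Cabs_mul. lra.
Qed.

Lemma dif1_inv w : w <> C0 -> dif1 Cinv w (Copp (Cinv (Cmul w w))).
Proof.
  intros Hw. apply dif1_quad. pose proof (Cabs_pos w Hw) as Pw.
  exists (2 / (Cabs w * Cabs w * Cabs w)), (Cabs w / 2). split.
  apply Rlt_le, Rdiv_lt_0_compat; [lra|]. repeat apply Rmult_lt_0_compat; auto.
  split. lra. intros k Hk.
  assert (Hwk : Cabs w / 2 <= Cabs (Cadd w k)).
  { pose proof (Cabs_split w (Copp k)). replace (Csub w (Copp k)) with (Cadd w k) in H by field.
    rewrite Cabs_opp in H. lra. }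
  assert (Nwk : Cadd w k <> C0) by (apply Cabs_neq0; lra).
  replace (Csub (Csub (Cinv (Cadd w k)) (Cinv w)) (Cmul (Copp (Cinv (Cmul w w))) k)) with
    (Cdiv (Cmul k k) (Cmul (Cmul w w) (Cadd w k))) by (field; auto).
  rewrite Cabs_div. 2:{ intro E. apply Cnorm2_pos in Hw. apply Cnorm2_pos in Nwk.
    assert (Cnorm2 (Cmul (Cmul w w) (Cadd w k)) = 0) by (rewrite E; unfold Cnorm2; simpl; ring).
    rewrite !Cnorm2_mul in H. assert (0 < Cnorm2 w * Cnorm2 w * Cnorm2 (Cadd w k)) by (repeat apply Rmult_lt_0_compat; auto). lra. }
  rewrite !Cabs_mul. pose proof (Cabs_ge0 k).
  unfold Rdiv. rewrite Rinv_mult, Rinv_mult.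
  set (a := Cabs w) in *. set (b := Cabs (Cadd w k)) in *. set (c := Cabs k) in *.
  assert (/ b <= 2 / a). { apply Rinv_le_contravar in Hwk. unfold Rdiv in *. rewrite Rinv_mult in Hwk.
    rewrite Rinv_inv in Hwk. lra. apply Rdiv_lt_0_compat; lra. }
  rewrite !Rinv_mult.
  assert (0 < /a) by (apply Rinv_0_lt_compat; lra).
  assert (0 <= c*c*(/a*/a)) by (apply Rmult_le_pos; nra).
  match goal with |- ?L <= ?R => replace L with (c*c*(/a*/a) * /b) by ring;
    replace R with (c*c*(/a*/a)*(2/a)) by (unfold Rdiv; ring) end.
  apply Rmult_le_compat_l; auto.
Qed.
Lemma Csqrt_sq x : Cmul (Csqrt x) (Csqrt x) = x.
Proof.
  destruct x as [a b]. set (x := {| Re := a; Im := b |}).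
  pose proof (Cabs_Re x) as HRe. simpl in HRe.
  assert (HN : Cabs x * Cabs x = a*a + b*b) by (rewrite Cabs_sq; reflexivity).
  set (N := Cabs x) in *.
  assert (A1 : 0 <= (N + a)/2) by (unfold Rabs in HRe; destruct (Rcase_abs a); lra).
  assert (A2 : 0 <= (N - a)/2) by (unfold Rabs in HRe; destruct (Rcase_abs a); lra).
  assert (Hp : sqrt ((N+a)/2) * sqrt ((N+a)/2) = (N+a)/2) by (apply sqrt_sqrt; auto).
  assert (Hq : sqrt ((N-a)/2) * sqrt ((N-a)/2) = (N-a)/2) by (apply sqrt_sqrt; auto).
  assert (Hpq : sqrt ((N+a)/2) * sqrt ((N-a)/2) = Rabs b / 2).
  { rewrite <- sqrt_mult by auto. replace ((N + a) / 2 * ((N - a) / 2)) with (Rsqr (b/2)).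
    rewrite sqrt_Rsqr_abs. unfold Rdiv. rewrite Rabs_mult. rewrite (Rabs_pos_eq (/2)). auto. lra.
    unfold Rsqr. nra. }
  unfold Csqrt, Cmul. fold x N. apply C_ext; simpl.
  - destruct (Rlt_dec b 0); nra.
  - destruct (Rlt_dec b 0).
    + rewrite Rabs_left in Hpq by auto. nra.
    + rewrite Rabs_pos_eq in Hpq by lra. nra.
Qed.

Lemma Csqrt_Re_ge0 x : 0 <= Re (Csqrt x).
Proof. unfold Csqrt; simpl. apply sqrt_pos. Qed.

Lemma Csqrt_Re_pos x : 0 < Re x -> 0 < Re (Csqrt x).
Proof.
  intros. unfold Csqrt; simpl. apply sqrt_lt_R0. pose proof (Cabs_Re x).
  unfold Rabs in H0. destruct (Rcase_abs (Re x)); lra.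
Qed.

Lemma Cabs_ge_Re z : Re z <= Cabs z.
Proof. pose proof (Cabs_Re z). unfold Rabs in H. destruct (Rcase_abs (Re z)); lra. Qed.

Lemma dif1_sqrt w : 0 < Re w -> dif1 Csqrt w (Cinv (Cmul (Cadd C1 C1) (Csqrt w))).
Proof.
  intros Hw. apply dif1_quad.
  set (r := Csqrt w). assert (Hr : 0 < Re r) by (apply Csqrt_Re_pos; auto).
  assert (Hr0 : r <> C0) by (intro E; rewrite E in Hr; simpl in Hr; lra).
  pose proof (Cabs_pos r Hr0) as Par.
  exists (/ (2 * Cabs r * (Re r * Re r))), 1. split.
  apply Rlt_le, Rinv_0_lt_compat. repeat apply Rmult_lt_0_compat; lra.
  split. lra. intros k _.
  assert (Er : Cmul r r = w) by apply Csqrt_sq.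
  assert (Er' : Cmul (Csqrt (Cadd w k)) (Csqrt (Cadd w k)) = Cadd w k) by apply Csqrt_sq.
  pose proof (Csqrt_Re_ge0 (Cadd w k)) as Hr'.
  generalize dependent (Csqrt (Cadd w k)). intros r' Er' Hr'.
  set (s := Cadd r' r).
  assert (Hs : Re r <= Cabs s). { pose proof (Cabs_ge_Re s). unfold s in *; simpl in *. lra. }
  assert (Hs0 : s <> C0) by (apply Cabs_neq0; lra).
  assert (Hk : k = Csub (Cmul r' r') (Cmul r r)) by (rewrite Er, Er'; field).
  assert (N2 : Cadd C1 C1 <> C0) by (apply Cabs_neq0; rewrite C2_abs; lra).
  assert (E : Csub (Csub r' r) (Cmul (Cinv (Cmul (Cadd C1 C1) r)) k) =
              Copp (Cdiv (Cmul k k) (Cmul (Cmul (Cadd C1 C1) r) (Cmul s s)))).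
  { rewrite Hk. unfold s. field. repeat split; auto. }
  rewrite E, Cabs_opp. 
  rewrite Cabs_div. 2:{ apply Cabs_neq0. rewrite !Cabs_mul, C2_abs.
     repeat apply Rmult_lt_0_compat; lra. }
  rewrite !Cabs_mul, C2_abs.
  pose proof (Cabs_ge0 k).
  set (c := Cabs k) in *. set (a := Cabs r) in *. set (b := Cabs s) in *.
  unfold Rdiv. 
  assert (HH1 : 0 < Re r * Re r) by (apply Rmult_lt_0_compat; lra).
  assert (HH2 : Re r * Re r <= b * b) by (apply Rmult_le_compat; lra).
  assert (/ (2 * a * (b * b)) <= / (2 * a * (Re r * Re r))).
  { apply Rinv_le_contravar. repeat apply Rmult_lt_0_compat; lra.
    apply Rmult_le_compat_l; lra. }
  assert (0 <= c*c) by nra.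
  match goal with |- ?L <= ?R => replace L with (c*c * / (2 * a * (b*b))) by ring;
    replace R with (c*c* / (2 * a * (Re r * Re r))) by ring end.
  apply Rmult_le_compat_l; auto.
Qed.
Ltac Cnz := let E := fresh in intro E; apply (f_equal Re) in E; simpl in E; lra.
Lemma C4_neq0 : Cadd (Cadd C1 C1) (Cadd C1 C1) <> C0.
Proof. intro E. assert (Re (Cadd (Cadd C1 C1) (Cadd C1 C1)) = Re C0) by (rewrite E; auto). simpl in H. lra. Qed.
Lemma C2_neq0 : Cadd C1 C1 <> C0.
Proof. intro E. assert (Re (Cadd C1 C1) = Re C0) by (rewrite E; auto). simpl in H. lra. Qed.

Lemma difE_scal n f z c : difE n f z -> difE n (fun x => Cmul c (f x)) z.
Proof. intros. eapply difE_chain; eauto. apply dif1_scal. Qed.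
Lemma difE_sq n f z : difE n f z -> difE n (fun x => Cmul (f x) (f x)) z.
Proof. intros. eapply difE_chain with (phi := fun x => Cmul x x); eauto. apply dif1_sq. Qed.
Lemma difE_sub n f g z : difE n f z -> difE n g z -> difE n (fun x => Csub (f x) (g x)) z.
Proof.
  intros. apply difE_ext with (fun x => Cadd (f x) (Cmul (Copp C1) (g x))).
  intros; field. apply difE_add; auto. apply difE_scal; auto.
Qed.
Lemma difE_mul n f g z : difE n f z -> difE n g z -> difE n (fun x => Cmul (f x) (g x)) z.
Proof.
  intros. apply difE_ext with (fun x => Cmul (Cinv (Cadd (Cadd C1 C1) (Cadd C1 C1)))
     (Csub (Cmul (Cadd (f x) (g x)) (Cadd (f x) (g x))) (Cmul (Csub (f x) (g x)) (Csub (f x) (g x))))).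
  intros; field. Cnz.
  apply difE_scal. apply difE_sub; apply difE_sq; [apply difE_add|apply difE_sub]; auto.
Qed.
Lemma difE_inv n f z : difE n f z -> f z <> C0 -> difE n (fun x => Cinv (f x)) z.
Proof. intros. eapply difE_chain with (phi := Cinv); eauto. apply dif1_inv; auto. Qed.
Lemma difE_div n f g z : difE n f z -> difE n g z -> g z <> C0 -> difE n (fun x => Cdiv (f x) (g x)) z.
Proof. intros. unfold Cdiv. apply difE_mul; auto. apply difE_inv; auto. Qed.
Lemma difE_sqrt n f z : difE n f z -> 0 < Re (f z) -> difE n (fun x => Csqrt (f x)) z.
Proof. intros. eapply difE_chain with (phi := Csqrt); eauto. apply dif1_sqrt; auto. Qed.
Lemma difE_sumC n k (F : pt -> nat -> C) z : (forall j, (j < k)%nat -> difE n (fun x => F x j) z) ->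
  difE n (fun x => sumC k (F x)) z.
Proof.
  induction k; simpl; intros. apply difE_const. apply difE_add. apply IHk; intros; apply H; lia.
  apply H; lia.
Qed.

Lemma sum_small n k F z A : (forall i, (i < k)%nat -> dif n (fun x => F x i) z (A i)) ->
  forall eps, eps > 0 -> exists delta, delta > 0 /\ forall h, inC n h -> nrm n h < delta ->
   sumR k (fun i => Cabs (Csub (Csub (F (fun j => Cadd (z j) (h j)) i) (F z i)) (lin n (A i) h)))
     <= eps * nrm n h.
Proof.
  induction k; intros HD eps He; simpl.
  - exists 1. split. lra. intros. pose proof (nrm_ge0 n h). nra.
  - destruct (IHk (fun i Hi => HD i ltac:(lia)) (eps/2) ltac:(lra)) as [d1 [H1 F1]].
    destruct (HD k ltac:(lia) (eps/2) ltac:(lra)) as [d2 [H2 F2]].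
    exists (Rmin d1 d2). split. apply Rmin_pos; auto. intros h Hh Hn.
    pose proof (F1 h Hh (Rlt_le_trans _ _ _ Hn (Rmin_l _ _))).
    pose proof (F2 h Hh (Rlt_le_trans _ _ _ Hn (Rmin_r _ _))). simpl in H0. lra.
Qed.

Lemma holo_of_comp n k (D : pt -> Prop) F :
  (forall z, D z -> forall i, (i < k)%nat -> difE n (fun x => F x i) z) -> holomorphic_on n k D F.
Proof.
  intros HD z Hz.
  assert (Ex : forall i, exists a, (i < k)%nat -> dif n (fun x => F x i) z a).
  { intro i. destruct (Nat.lt_ge_cases i k) as [l|l]. destruct (HD z Hz i l) as [a Ha]. exists a; auto.
    exists (fun _ => C0). intro; lia. }
  exists (fun i => proj1_sig (constructive_indefinite_description _ (Ex i))).
  intros eps He.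
  destruct (sum_small n k F z (fun i => proj1_sig (constructive_indefinite_description _ (Ex i))))
    with (eps := eps) as [d [Hd Fd]]; auto.
  { intros i Hi. destruct (constructive_indefinite_description _ (Ex i)) as [a Ha]. simpl. auto. }
  exists d. split; auto. intros h Hh Hn.
  eapply Rle_trans. 2: apply (Fd h Hh Hn).
  apply (sqrt_sum_le k (fun i => Csub (Csub (F (fun j => Cadd (z j) (h j)) i) (F z i))
      (lin n (proj1_sig (constructive_indefinite_description _ (Ex i))) h))).
Qed.

Lemma sum_lip n k F z : (forall i, (i < k)%nat -> difE n (fun x => F x i) z) ->
  exists C delta, 0 <= C /\ delta > 0 /\ forall h, inC n h -> nrm n h < delta ->
   sumR k (fun i => Cabs (Csub (F (fun j => Cadd (z j) (h j)) i) (F z i))) <= C * nrm n h.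
Proof.
  induction k; intros HD; simpl.
  - exists 0, 1. split. lra. split. lra. intros. lra.
  - destruct IHk as [C1 [d1 [HC1 [H1 F1]]]]. intros; apply HD; lia.
    destruct (HD k ltac:(lia)) as [a Ha]. destruct (dif_bound _ _ _ _ Ha) as [d2 [H2 F2]].
    exists (C1 + (1 + cnst n a)), (Rmin d1 d2). pose proof (cnst_ge0 n a).
    split. lra. split. apply Rmin_pos; auto. intros h Hh Hn.
    pose proof (F1 h Hh (Rlt_le_trans _ _ _ Hn (Rmin_l _ _))).
    pose proof (F2 h Hh (Rlt_le_trans _ _ _ Hn (Rmin_r _ _))). simpl in H3. lra.
Qed.

Lemma cont_of_comp n k F z : (forall i, (i < k)%nat -> difE n (fun x => F x i) z) ->
  forall r, r > 0 -> exists delta, delta > 0 /\ forall h, inC n h -> nrm n h < delta ->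
    vnorm2 k (fun i => Csub (F (fun j => Cadd (z j) (h j)) i) (F z i)) < r.
Proof.
  intros HD r Hr. destruct (sum_lip n k F z HD) as [C [d [HC [Hd Fd]]]].
  pose proof (sqrt_lt_R0 r Hr) as Hsr.
  exists (Rmin d (sqrt r / (C + 1))). split. apply Rmin_pos; auto. apply Rdiv_lt_0_compat; lra.
  intros h Hh Hn. pose proof (Fd h Hh (Rlt_le_trans _ _ _ Hn (Rmin_l _ _))).
  assert (Hn2 : nrm n h < sqrt r / (C+1)) by (eapply Rlt_le_trans; [exact Hn|apply Rmin_r]).
  pose proof (nrm_ge0 n h).
  assert (C * nrm n h < sqrt r).
  { apply Rle_lt_trans with ((C+1) * nrm n h). nra.
    apply (Rmult_lt_compat_l (C+1)) in Hn2; [|lra].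
    replace ((C + 1) * (sqrt r / (C + 1))) with (sqrt r) in Hn2 by (field; lra). lra. }
  set (f := fun i => Csub (F (fun j => Cadd (z j) (h j)) i) (F z i)).
  pose proof (sqrt_sum_le k f) as Hq.
  assert (H' : sumR k (fun i => Cabs (f i)) <= C * nrm n h) by exact H.
  assert (Hfin : sqrt (vnorm2 k f) < sqrt r) by (unfold vnorm2; lra).
  apply sqrt_lt_0_alt in Hfin. auto.
Qed.
Definition rc (k : nat) (f : pt -> R) (x : pt) : Prop :=
  forall eps, eps > 0 -> exists delta, delta > 0 /\ forall y, inC k y -> dist k x y < delta ->
    Rabs (f y - f x) < eps.
Definition rcC k (f : pt -> C) x := rc k (fun y => Re (f y)) x /\ rc k (fun y => Im (f y)) x.

Lemma rc_const k c x : rc k (fun _ => c) x.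
Proof. intros eps He. exists 1. split. lra. intros. replace (c - c) with 0 by ring. rewrite Rabs_R0; lra. Qed.

Lemma dist_comp k x y i : (i < k)%nat -> Cabs (Csub (x i) (y i)) <= dist k x y.
Proof. intros. unfold dist. apply (Cabs_le_norm k (fun i => Csub (x i) (y i))); auto. Qed.

Lemma rc_Re k i x : (i < k)%nat -> rc k (fun y => Re (y i)) x.
Proof.
  intros Hi eps He. exists eps. split; auto. intros y Hy Hd.
  pose proof (dist_comp k x y i Hi). pose proof (Cabs_Re (Csub (x i) (y i))).
  simpl in H0. rewrite Rabs_minus_sym. replace (Re (x i) - Re (y i)) with (Re (x i) + - Re (y i)) by ring. lra.
Qed.
Lemma rc_Im k i x : (i < k)%nat -> rc k (fun y => Im (y i)) x.
Proof.
  intros Hi eps He. exists eps. split; auto. intros y Hy Hd.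
  pose proof (dist_comp k x y i Hi). pose proof (Cabs_Im (Csub (x i) (y i))).
  simpl in H0. rewrite Rabs_minus_sym. replace (Im (x i) - Im (y i)) with (Im (x i) + - Im (y i)) by ring. lra.
Qed.

Lemma rc_plus k f g x : rc k f x -> rc k g x -> rc k (fun y => f y + g y) x.
Proof.
  intros Hf Hg eps He. destruct (Hf (eps/2) ltac:(lra)) as [d1 [H1 F1]].
  destruct (Hg (eps/2) ltac:(lra)) as [d2 [H2 F2]].
  exists (Rmin d1 d2). split. apply Rmin_pos; auto. intros y Hy Hd.
  pose proof (F1 y Hy (Rlt_le_trans _ _ _ Hd (Rmin_l _ _))).
  pose proof (F2 y Hy (Rlt_le_trans _ _ _ Hd (Rmin_r _ _))).
  replace (f y + g y - (f x + g x)) with ((f y - f x) + (g y - g x)) by ring.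
  eapply Rle_lt_trans. apply Rabs_triang. lra.
Qed.
Lemma rc_opp k f x : rc k f x -> rc k (fun y => - f y) x.
Proof.
  intros Hf eps He. destruct (Hf eps He) as [d [H F]]. exists d. split; auto. intros.
  replace (- f y - - f x) with (- (f y - f x)) by ring. rewrite Rabs_Ropp. auto.
Qed.
Lemma rc_mult k f g x : rc k f x -> rc k g x -> rc k (fun y => f y * g y) x.
Proof.
  intros Hf Hg eps He.
  set (A := Rabs (f x)). set (B := Rabs (g x)).
  assert (HA : 0 <= A) by apply Rabs_pos. assert (HB : 0 <= B) by apply Rabs_pos.
  destruct (Hf (eps / (2 * (B + 1))) ltac:(apply Rdiv_lt_0_compat; lra)) as [d1 [H1 F1]].
  destruct (Hg (Rmin 1 (eps / (2 * (A + 1)))) ltac:(apply Rmin_pos; [lra|apply Rdiv_lt_0_compat; lra])) as [d2 [H2 F2]].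
  exists (Rmin d1 d2). split. apply Rmin_pos; auto. intros y Hy Hd.
  pose proof (F1 y Hy (Rlt_le_trans _ _ _ Hd (Rmin_l _ _))) as B1.
  pose proof (F2 y Hy (Rlt_le_trans _ _ _ Hd (Rmin_r _ _))) as B2.
  pose proof (Rmin_l 1 (eps / (2 * (A + 1)))). pose proof (Rmin_r 1 (eps / (2 * (A + 1)))).
  replace (f y * g y - f x * g x) with ((f y - f x) * g y + f x * (g y - g x)) by ring.
  eapply Rle_lt_trans. apply Rabs_triang. rewrite !Rabs_mult.
  assert (Hgy : Rabs (g y) <= B + 1).
  { replace (g y) with (g x + (g y - g x)) by ring. eapply Rle_trans. apply Rabs_triang. unfold B. lra. }
  assert (X1 : Rabs (f y - f x) * Rabs (g y) <= eps / (2 * (B + 1)) * (B+1)).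
  { apply Rmult_le_compat; try apply Rabs_pos; lra. }
  assert (X2 : A * Rabs (g y - g x) <= A * (eps / (2 * (A + 1)))).
  { apply Rmult_le_compat_l; lra. }
  replace (eps / (2 * (B + 1)) * (B+1)) with (eps/2) in X1 by (field; lra).
  assert (A * (eps / (2 * (A + 1))) < eps / 2).
  { replace (A * (eps / (2 * (A + 1)))) with ((A/(A+1)) * (eps/2)) by (field; lra).
    apply Rle_lt_trans with (A / (A+1) * (eps/2)). lra.
    rewrite <- (Rmult_1_l (eps/2)) at 2. apply Rmult_lt_compat_r. lra.
    replace (A/(A+1)) with (1 - 1/(A+1)) by (field; lra).
    assert (0 < 1/(A+1)) by (apply Rdiv_lt_0_compat; lra). lra. }
  fold A. lra.
Qed.

Lemma rc_sumR k n F x : (forall i, (i < n)%nat -> rc k (fun y => F y i) x) -> rc k (fun y => sumR n (F y)) x.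
Proof.
  induction n; simpl; intros. apply rc_const. apply rc_plus. apply IHn; intros; apply H; lia. apply H; lia.
Qed.

Lemma rcC_proj k i x : (i < k)%nat -> rcC k (fun y => y i) x.
Proof. split; [apply rc_Re|apply rc_Im]; auto. Qed.
Lemma rcC_const k c x : rcC k (fun _ => c) x.
Proof. split; apply rc_const. Qed.
Lemma rcC_add k f g x : rcC k f x -> rcC k g x -> rcC k (fun y => Cadd (f y) (g y)) x.
Proof. intros [] []. split; simpl; apply rc_plus; auto. Qed.
Lemma rcC_opp k f x : rcC k f x -> rcC k (fun y => Copp (f y)) x.
Proof. intros []. split; simpl; apply rc_opp; auto. Qed.
Lemma rcC_sub k f g x : rcC k f x -> rcC k g x -> rcC k (fun y => Csub (f y) (g y)) x.
Proof. intros. unfold Csub. apply rcC_add; auto. apply rcC_opp; auto. Qed.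
Lemma rcC_mul k f g x : rcC k f x -> rcC k g x -> rcC k (fun y => Cmul (f y) (g y)) x.
Proof.
  intros [] []. split; simpl.
  apply rc_plus. apply rc_mult; auto. apply rc_opp, rc_mult; auto.
  apply rc_plus; apply rc_mult; auto.
Qed.
Lemma rcC_sumC k n F x : (forall i, (i < n)%nat -> rcC k (fun y => F y i) x) -> rcC k (fun y => sumC n (F y)) x.
Proof.
  induction n; simpl; intros. apply rcC_const. apply rcC_add. apply IHn; intros; apply H; lia. apply H; lia.
Qed.
Lemma rc_Cnorm2 k f x : rcC k f x -> rc k (fun y => Cnorm2 (f y)) x.
Proof. intros []. unfold Cnorm2. apply rc_plus; apply rc_mult; auto. Qed.
Lemma rc_vnorm2_sub k (y : pt) x : rc k (fun z => vnorm2 k (fun i => Csub (z i) (y i))) x.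
Proof.
  unfold vnorm2. apply rc_sumR with (F := fun z i => Cnorm2 (Csub (z i) (y i))). intros.
  apply rc_Cnorm2. apply rcC_sub. apply rcC_proj; auto. apply rcC_const.
Qed.
Lemma rc_vnorm2 k x : rc k (fun z => vnorm2 k z) x.
Proof.
  unfold vnorm2. apply rc_sumR with (F := fun z i => Cnorm2 (z i)). intros.
  apply rc_Cnorm2. apply rcC_proj; auto.
Qed.
Lemma rc_ivform k x : rc k (ivform k) x.
Proof.
  unfold ivform. apply rc_plus. apply rc_plus. apply rc_const. apply rc_opp. apply rc_vnorm2.
  apply rc_mult. apply rc_const. apply rc_Cnorm2. apply rcC_sumC with (F := fun y i => Cmul (y i) (y i)).
  intros. apply rcC_mul; apply rcC_proj; auto.
Qed.
Lemma open_gt k f c : (forall x, inC k x -> rc k f x) -> open_in k (fun y => f y > c).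
Proof.
  intros Hc x Hx Hfx. destruct (Hc x Hx (f x - c) ltac:(lra)) as [d [Hd F]].
  exists d. split; auto. intros y Hy Hdy. pose proof (F y Hy Hdy).
  unfold Rabs in H; destruct (Rcase_abs (f y - f x)); lra.
Qed.

Lemma in_max_le (l : list nat) i : In i l -> (i <= fold_right Nat.max 0%nat l)%nat.
Proof. induction l; simpl; intros. contradiction. destruct H. subst; lia. specialize (IHl H). lia. Qed.

Lemma compact_min k K f : compact k K -> (forall x, inC k x -> rc k f x) ->
  (forall Z, K Z -> f Z > 0) -> exists delta, delta > 0 /\ forall Z, K Z -> delta <= f Z.
Proof.
  intros [Hsub Hcov] Hc Hpos.
  destruct (Hcov nat (fun j y => f y > / (INR j + 1))) as [l Hl].
  - intros j. apply open_gt; auto.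
  - intros x Kx. pose proof (Hpos x Kx). destruct (archimed (/ f x)) as [H1 _].
    assert (0 <= IZR (up (/ f x))). { pose proof (Rinv_0_lt_compat _ H). lra. }
    exists (Z.to_nat (up (/ f x))). rewrite INR_IZR_INZ. rewrite Z2Nat.id.
    2:{ apply le_IZR. lra. }
    set (u := IZR (up (/ f x))) in *.
    assert (0 < u + 1) by lra.
    assert (/ (u+1) < / / f x). { apply Rinv_lt_contravar. apply Rmult_lt_0_compat.
      apply Rinv_0_lt_compat; auto. lra. lra. }
    rewrite Rinv_inv in H3. lra.
  - set (N := fold_right Nat.max 0%nat l). exists (/ (INR N + 1)). split.
    apply Rinv_0_lt_compat. pose proof (pos_INR N); lra.
    intros Z KZ. destruct (Hl Z KZ) as [j [Hj Uj]]. apply in_max_le in Hj.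
    apply le_INR in Hj. fold N in Hj. apply Rlt_le. eapply Rle_lt_trans; [|exact Uj].
    apply Rinv_le_contravar. pose proof (pos_INR j); lra. lra.
Qed.

Lemma pt_eq_of_vnorm k z y : inC k z -> inC k y -> vnorm2 k (fun i => Csub (z i) (y i)) = 0 -> z = y.
Proof.
  intros Hz Hy H. apply functional_extensionality. intro i.
  destruct (Nat.lt_ge_cases i k).
  - pose proof (Cnorm2_le_vnorm2 k (fun i => Csub (z i) (y i)) i H0). simpl in H1.
    rewrite H in H1. pose proof (Cnorm2_ge0 (Csub (z i) (y i))).
    assert (Csub (z i) (y i) = C0) by (apply Cnorm2_eq0; lra).
    replace (z i) with (Cadd (Csub (z i) (y i)) (y i)) by field. rewrite H3. field.
  - rewrite Hz, Hy; auto.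
Qed.

Lemma compact_closed k K y : compact k K -> inC k y -> ~ K y ->
  exists r, r > 0 /\ forall z, inC k z -> vnorm2 k (fun i => Csub (z i) (y i)) < r -> ~ K z.
Proof.
  intros HK Hy Ny.
  destruct (compact_min k K (fun z => vnorm2 k (fun i => Csub (z i) (y i))) HK) as [d [Hd F]].
  - intros; apply rc_vnorm2_sub.
  - intros Z KZ. pose proof (vnorm2_ge0 k (fun i => Csub (Z i) (y i))).
    destruct H. auto. exfalso. apply Ny. replace y with Z; auto. apply (pt_eq_of_vnorm k); auto.
    apply HK; auto.
  - exists d. split; auto. intros z Hz Hlt Kz. pose proof (F z Kz). simpl in H. lra.
Qed.

Fixpoint somes {I : Type} (l : list (option I)) : list I :=
  match l with nil => nil | Some i :: t => i :: somes t | None :: t => somes t end.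
Lemma somes_in {I} (l : list (option I)) i : In (Some i) l -> In i (somes l).
Proof. induction l as [|[a|] t IH]; simpl; intros. auto. destruct H. inversion H; auto. right; auto.
  destruct H. discriminate. auto. Qed.

Lemma closed_sub_compact k T S : compact k T -> (forall x, S x -> T x) ->
  open_in k (fun x => ~ S x) -> compact k S.
Proof.
  intros [Hsub Hcov] HST Hop. split. intros; apply Hsub, HST; auto.
  intros I U HU Hc.
  destruct (Hcov (option I) (fun o => match o with Some i => U i | None => fun x => ~ S x end)) as [l Hl].
  - intros [i|]; auto.
  - intros x Tx. destruct (classic (S x)). destruct (Hc x H) as [i Hi]. exists (Some i); auto.
    exists None; auto.
  - exists (somes l). intros x Sx. destruct (Hl x (HST x Sx)) as [[i|] [Hi Ui]].
    exists i; split; auto. apply somes_in; auto. contradiction.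
Qed.

Lemma image_compact k m K (psi : pt -> pt) : compact k K -> (forall Z, inC m (psi Z)) ->
  (forall x y, vnorm2 m (fun i => Csub (psi x i) (psi y i)) <= vnorm2 k (fun i => Csub (x i) (y i))) ->
  compact m (fun w => exists Z, K Z /\ w = psi Z).
Proof.
  intros [Hsub Hcov] Hin Hlip. split. intros w [Z [_ E]]; subst; auto.
  intros I U HU Hc.
  destruct (Hcov I (fun i Z => U i (psi Z))) as [l Hl].
  - intros i x Hx Ux. destruct (HU i (psi x) (Hin x) Ux) as [e [He F]].
    exists e. split; auto. intros y Hy Hd. apply F. auto. unfold dist in *.
    eapply Rle_lt_trans; [|exact Hd]. apply sqrt_le_1_alt. apply Hlip.
  - intros Z KZ. apply Hc. exists Z; auto.
  - exists l. intros w [Z [KZ E]]. subst. auto.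
Qed.
Lemma closed_inter_compact k T V : compact k T -> open_in k V -> compact k (fun x => T x /\ ~ V x).
Proof.
  intros HT HV. apply (closed_sub_compact k T). auto. intros x []; auto.
  intros x Hx Nx. destruct (classic (T x)).
  - assert (V x) by (apply NNPP; intro; apply Nx; auto).
    destruct (HV x Hx H0) as [e [He F]]. exists e. split; auto. intros y Hy Hd [_ Hy']. apply Hy'; auto.
  -
    destruct (compact_closed k T x HT Hx H) as [r [Hr F]].
    exists (sqrt r). split. apply sqrt_lt_R0; auto. intros y Hy Hd [Ty _].
    apply (F y Hy); auto. unfold dist in Hd. apply sqrt_lt_0_alt.
    replace (vnorm2 k (fun i => Csub (y i) (x i))) with (vnorm2 k (fun i => Csub (x i) (y i))); auto.
    unfold vnorm2. apply sumR_ext. intros. unfold Cnorm2; simpl. ring.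
Qed.

Lemma vnorm2_sub_sym k x y : vnorm2 k (fun i => Csub (x i) (y i)) = vnorm2 k (fun i => Csub (y i) (x i)).
Proof. unfold vnorm2. apply sumR_ext. intros. unfold Cnorm2; simpl. ring. Qed.

Lemma proper_gen m n G Phi psi :
  proper_map n m (ball n) (ball m) G ->
  (forall z, ball n z -> G z = psi (Phi z)) ->
  (forall z, ball n z -> ivform (S m) (Phi z) = 1 - vnorm2 m (G z)) ->
  (forall Z, inC m (psi Z)) ->
  (forall x y, vnorm2 m (fun i => Csub (psi x i) (psi y i)) <= vnorm2 (S m) (fun i => Csub (x i) (y i))) ->
  (forall z, inC (S m) (Phi z)) ->
  (forall z, ball n z -> forall i, (i < S m)%nat -> difE n (fun x => Phi x i) z) ->
  proper_map n (S m) (ball n) (DIV (S m)) Phi.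
Proof.
  intros HG Epsi Eiv Hpsi Hlip HPhi HD K HK HKD.
  destruct (compact_min (S m) K (ivform (S m)) HK) as [d [Hd Fd]].
  { intros; apply rc_ivform. }
  { intros Z KZ. destruct (HKD Z KZ) as [_ [_ H]]. auto. }
  set (K' := fun w => (exists Z, K Z /\ w = psi Z) /\ ~ (vnorm2 m w > 1 - d)).
  assert (CK' : compact m K').
  { apply closed_inter_compact. apply (image_compact (S m)); auto. apply open_gt. intros; apply rc_vnorm2. }
  assert (K'b : forall w, K' w -> ball m w).
  { intros w [[Z [_ E]] Hn]. subst. split; auto. lra. }
  pose proof (HG K' CK' K'b) as CT.
  apply (closed_sub_compact n (fun z => ball n z /\ K' (G z))); auto.
  - intros z [Bz Kz]. split; auto. split. exists (Phi z); auto.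
    rewrite <- (Rminus_0_r (vnorm2 m (G z))). pose proof (Eiv z Bz). pose proof (Fd _ Kz). lra.
  - intros x Hx Nx. destruct (classic (ball n x)) as [Bx|Bx].
    + assert (NK : ~ K (Phi x)) by (intro; apply Nx; auto).
      destruct (compact_closed (S m) K (Phi x) HK (HPhi x) NK) as [r [Hr Fr]].
      destruct (cont_of_comp n (S m) Phi x (HD x Bx) r Hr) as [e [He Fe]].
      exists e. split; auto. intros y Hy Hdy [By Ky].
      set (h := fun j => Csub (y j) (x j)).
      assert (Eh : (fun j => Cadd (x j) (h j)) = y).
      { apply functional_extensionality; intro j. unfold h. field. }
      assert (Hh : inC n h). { intros i Hi. unfold h. rewrite Hx, Hy by auto. unfold C0. Cext; ring. }
      assert (Hn : nrm n h < e). { unfold nrm, h. rewrite <- vnorm2_sub_sym. auto. }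
      pose proof (Fe h Hh Hn). rewrite Eh in H.
      apply (Fr (Phi y) (HPhi y) H). auto.
    + assert (NT : ~ (ball n x /\ K' (G x))) by (intros []; auto).
      destruct (compact_closed n _ x CT Hx NT) as [r [Hr Fr]].
      exists (sqrt r). split. apply sqrt_lt_R0; auto. intros y Hy Hdy [By Ky].
      apply (Fr y Hy). unfold dist in Hdy. apply sqrt_lt_0_alt. rewrite vnorm2_sub_sym. auto.
      split; auto. split. exists (Phi y); auto.
      pose proof (Eiv y By). pose proof (Fd _ Ky). lra.
Qed.
Definition Pm_ (s w : C) := Cadd (Csub (Cmul half s) (sq w)) w.
Definition Pm1_ (s w : C) := Cmul Ci (Csub (Cadd (Cmul half s) (sq w)) w).
Definition c2 := RtoC (sqrt 2).
Definition sG (p : nat) (G : pt -> pt) (z : pt) := sumC p (fun j => sq (G z j)).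

Lemma Hmap_lt p G z i : (i < p)%nat -> H_map (S p) G z i = G z i.
Proof. intros. unfold H_map. replace (S p - 1)%nat with p by lia.
  destruct (Nat.ltb_spec i p); [auto|lia]. Qed.
Lemma Hmap_p p G z : H_map (S p) G z p =
  Cdiv (Pm_ (sG p G z) (G z p)) (Cmul c2 (Csub C1 (G z p))).
Proof. unfold H_map. replace (S p - 1)%nat with p by lia.
  rewrite Nat.ltb_irrefl, Nat.eqb_refl. reflexivity. Qed.
Lemma Hmap_Sp p G z : H_map (S p) G z (S p) =
  Cdiv (Pm1_ (sG p G z) (G z p)) (Cmul c2 (Csub C1 (G z p))).
Proof. unfold H_map. replace (S p - 1)%nat with p by lia.
  destruct (Nat.ltb_spec (S p) p); [lia|]. destruct (Nat.eqb_spec (S p) p); [lia|].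
  rewrite Nat.eqb_refl. reflexivity. Qed.
Lemma Hmap_inC p G z : inC (S (S p)) (H_map (S p) G z).
Proof. intros i Hi. unfold H_map. replace (S p - 1)%nat with p by lia.
  destruct (Nat.ltb_spec i p); [lia|]. destruct (Nat.eqb_spec i p); [lia|].
  destruct (Nat.eqb_spec i (S p)); [lia|]. auto. Qed.

Lemma c2_nz : c2 <> C0.
Proof. unfold c2. intro E. apply (f_equal Re) in E. simpl in E. pose proof (sqrt_lt_R0 2). lra. Qed.
Lemma c2_sq : Cmul c2 c2 = Cadd C1 C1.
Proof. unfold c2, RtoC, Cmul. Cext. rewrite sqrt_sqrt; lra. ring. Qed.
Lemma c2_norm : Cnorm2 (Cinv c2) = / 2.
Proof. rewrite Cnorm2_inv by apply c2_nz. unfold c2, Cnorm2; simpl. rewrite sqrt_sqrt by lra. f_equal. ring. Qed.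

Lemma div_c2 P Y : Y <> C0 -> Cdiv P (Cmul c2 Y) = Cmul (Cinv c2) (Cdiv P Y).
Proof. intros. field. split; auto. apply c2_nz. Qed.
Lemma sq_c2 Z : sq (Cmul (Cinv c2) Z) = Cmul (Cinv (Cadd C1 C1)) (sq Z).
Proof. unfold sq. rewrite <- c2_sq. field. apply c2_nz. Qed.
Lemma norm_c2 Z : Cnorm2 (Cmul (Cinv c2) Z) = / 2 * Cnorm2 Z.
Proof. rewrite Cnorm2_mul, c2_norm. auto. Qed.

Lemma H_core (s w : C) (a : R) : Csub C1 w <> C0 ->
 1 - (a + / 2 * Cnorm2 (Cdiv (Pm_ s w) (Csub C1 w)) + / 2 * Cnorm2 (Cdiv (Pm1_ s w) (Csub C1 w)))
  + / 4 * Cnorm2 (Cadd (Cadd s (Cmul (Cinv (Cadd C1 C1)) (sq (Cdiv (Pm_ s w) (Csub C1 w)))))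
                       (Cmul (Cinv (Cadd C1 C1)) (sq (Cdiv (Pm1_ s w) (Csub C1 w)))))
 = 1 - (a + Cnorm2 w).
Proof.
  intro H. apply Cnorm2_pos in H.
  destruct s as [s1 s2], w as [u v]. unfold Pm_, Pm1_, Cdiv, Cinv, Cnorm2, sq, half, Cmul, Cadd, Csub, Copp, Ci, C1, RtoC in *; simpl in *.
  field. lra.
Qed.

Lemma H_core2 (s w : C) : Csub C1 w <> C0 ->
 / 2 * Cnorm2 (Cdiv (Pm_ s w) (Csub C1 w)) + / 2 * Cnorm2 (Cdiv (Pm1_ s w) (Csub C1 w))
 = Cnorm2 w + Cnorm2 s / (4 * Cnorm2 (Csub C1 w)).
Proof.
  intro H. apply Cnorm2_pos in H.
  destruct s as [s1 s2], w as [u v]. unfold Pm_, Pm1_, Cdiv, Cinv, Cnorm2, sq, half, Cmul, Cadd, Csub, Copp, Ci, C1, RtoC in *; simpl in *.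
  field. lra.
Qed.
Lemma Cabs_sq_C x : Cabs (sq x) = Cnorm2 x.
Proof. unfold sq. rewrite Cabs_mul. apply Cabs_sq. Qed.
Lemma Cabs_sumsq k g : Cabs (sumC k (fun j => sq (g j))) <= sumR k (fun j => Cnorm2 (g j)).
Proof. eapply Rle_trans. apply Cabs_sumC. apply sumR_le. intros. rewrite Cabs_sq_C. lra. Qed.

Lemma sq_c2' Z : Cmul (Cmul (Cinv c2) Z) (Cmul (Cinv c2) Z) = Cmul (Cinv (Cadd C1 C1)) (sq Z).
Proof. apply sq_c2. Qed.

Lemma H_ivform p G z : Csub C1 (G z p) <> C0 ->
  ivform (S (S p)) (H_map (S p) G z) = 1 - vnorm2 (S p) (G z).
Proof.
  intros Hw. unfold ivform, vnorm2. cbn [sumR sumC].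
  rewrite (sumR_ext p _ (fun i => Cnorm2 (G z i))) by (intros; rewrite Hmap_lt; auto).
  rewrite (sumC_ext p _ (fun i => sq (G z i))) by (intros; rewrite Hmap_lt; auto).
  rewrite Hmap_p, Hmap_Sp, !div_c2 by auto. rewrite !norm_c2.
  rewrite !sq_c2'. fold (sG p G z).
  apply H_core; auto.
Qed.

Lemma H_norm_lt2 p G z : vnorm2 (S p) (G z) < 1 ->
  vnorm2 (S (S p)) (H_map (S p) G z) < 2.
Proof.
  intros Hn. unfold vnorm2 in *. cbn [sumR] in *.
  rewrite (sumR_ext p _ (fun i => Cnorm2 (G z i))) by (intros; rewrite Hmap_lt; auto).
  set (a := sumR p (fun i => Cnorm2 (G z i))) in *. set (w := G z p) in *.
  assert (Ha : 0 <= a) by (apply sumR_ge0; intros; apply Cnorm2_ge0).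
  pose proof (Cabs_sumsq p (G z)) as Hs. fold a (sG p G z) in Hs.
  set (s := sG p G z) in *.
  pose proof (Cabs_ge_Re w) as Hu.
  pose proof (Cabs_sq w) as Hr. set (r := Cabs w) in *. pose proof (Cabs_ge0 w) as Hr0. fold r in Hr0.
  assert (Hr1 : r < 1) by nra.
  assert (HD : (1 - r) * (1 - r) <= Cnorm2 (Csub C1 w)).
  { unfold Cnorm2 in *; simpl. nra. }
  assert (Hw : Csub C1 w <> C0). { intro E. rewrite E in HD. unfold Cnorm2 in HD; simpl in HD. nra. }
  rewrite Hmap_p, Hmap_Sp, !div_c2 by auto. rewrite !norm_c2.
  rewrite Rplus_assoc. rewrite H_core2 by auto.
  pose proof (Cabs_ge0 s). pose proof (Cabs_sq s).
  assert (Hs2 : Cnorm2 s <= a * a) by nra.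
  assert (Hq : Cnorm2 s / (4 * Cnorm2 (Csub C1 w)) <= (1 + r) * (1 + r) / 4).
  { assert (0 < (1-r)*(1-r)) by nra.
    apply Rle_trans with (a * a / (4 * ((1 - r) * (1 - r)))).
    unfold Rdiv. apply Rmult_le_compat. apply Cnorm2_ge0. apply Rlt_le, Rinv_0_lt_compat. lra.
    auto. apply Rinv_le_contravar. lra. lra.
    assert (a <= (1 - r) * (1 + r)) by nra.
    apply Rle_trans with ((1-r)*(1+r) * ((1-r)*(1+r)) / (4 * ((1 - r) * (1 - r)))).
    unfold Rdiv. apply Rmult_le_compat_r. apply Rlt_le, Rinv_0_lt_compat. lra.
    apply Rmult_le_compat; lra. right. field. lra. }
  assert ((1+r)*(1+r)/4 < 1) by nra. fold w s. lra.
Qed.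
Definition SG (m : nat) (G : pt -> pt) (z : pt) := sumC m (fun j => sq (G z j)).
Lemma Wmap_lt m G z i : (i < m)%nat -> W_map m G z i = G z i.
Proof. intros. unfold W_map. destruct (Nat.ltb_spec i m); [auto|lia]. Qed.
Lemma Wmap_m m G z : W_map m G z m = Csub C1 (Csqrt (Csub C1 (SG m G z))).
Proof. unfold W_map. rewrite Nat.ltb_irrefl, Nat.eqb_refl. reflexivity. Qed.
Lemma Wmap_inC m G z : inC (S m) (W_map m G z).
Proof. intros i Hi. unfold W_map. destruct (Nat.ltb_spec i m); [lia|].
  destruct (Nat.eqb_spec i m); [lia|]. auto. Qed.

Lemma W_ivform m G z : ivform (S m) (W_map m G z) = 1 - vnorm2 m (G z).
Proof.
  unfold ivform, vnorm2. cbn [sumR sumC].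
  rewrite (sumR_ext m _ (fun i => Cnorm2 (G z i))) by (intros; rewrite Wmap_lt; auto).
  rewrite (sumC_ext m _ (fun i => Cmul (G z i) (G z i))) by (intros; rewrite Wmap_lt; auto).
  rewrite Wmap_m. fold (sq (G z m)).
  change (sumC m (fun i => Cmul (G z i) (G z i))) with (SG m G z).
  set (S0 := SG m G z). assert (Er := Csqrt_sq (Csub C1 S0)).
  set (r := Csqrt (Csub C1 S0)) in *.
  assert (E : Cadd S0 (Cmul (Csub C1 r) (Csub C1 r)) = Cmul (Cadd C1 C1) (Csub C1 r)).
  { replace S0 with (Csub C1 (Cmul r r)) by (rewrite Er; field). field. }
  rewrite E, Cnorm2_mul. replace (Cnorm2 (Cadd C1 C1)) with 4 by (unfold Cnorm2; simpl; ring).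
  lra.
Qed.

Lemma one_plus_norm r : 0 <= Re r -> 1 <= Cnorm2 (Cadd C1 r).
Proof. destruct r as [x y]; unfold Cnorm2; simpl; intros. nra. Qed.

Lemma W_norm_lt2 m G z : vnorm2 m (G z) < 1 -> vnorm2 (S m) (W_map m G z) < 2.
Proof.
  intros Hn. unfold vnorm2 in *. cbn [sumR].
  rewrite (sumR_ext m _ (fun i => Cnorm2 (G z i))) by (intros; rewrite Wmap_lt; auto).
  rewrite Wmap_m. set (A := sumR m (fun i => Cnorm2 (G z i))) in *.
  pose proof (Cabs_sumsq m (G z)) as Hs. fold A in Hs. change (sumC m (fun j => sq (G z j))) with (SG m G z) in Hs.
  set (S0 := SG m G z) in *. assert (Er := Csqrt_sq (Csub C1 S0)).
  pose proof (Csqrt_Re_ge0 (Csub C1 S0)).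
  set (r := Csqrt (Csub C1 S0)) in *.
  assert (E : Cmul (Csub C1 r) (Cadd C1 r) = S0) by (replace S0 with (Csub C1 (Cmul r r)) by (rewrite Er; field); field).
  assert (N1 : 1 <= Cnorm2 (Cadd C1 r)) by (apply one_plus_norm; auto).
  pose proof (Cabs_ge0 S0). pose proof (Cabs_sq S0).
  assert (HA0 : 0 <= A) by (apply sumR_ge0; intros; apply Cnorm2_ge0).
  assert (Cabs S0 * Cabs S0 <= A * A) by (apply Rmult_le_compat; lra).
  assert (A * A < 1) by (apply Rle_lt_trans with (A * 1); [apply Rmult_le_compat_l; lra| lra]).
  assert (HS0 : Cnorm2 S0 < 1) by lra.
  rewrite <- E, Cnorm2_mul in HS0. pose proof (Cnorm2_ge0 (Csub C1 r)).
  assert (Cnorm2 (Csub C1 r) <= Cnorm2 (Csub C1 r) * Cnorm2 (Cadd C1 r)).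
  { rewrite <- (Rmult_1_r (Cnorm2 (Csub C1 r))) at 1. apply Rmult_le_compat_l; lra. }
  lra.
Qed.

Lemma W_Re_pos m G z : vnorm2 m (G z) < 1 -> 0 < Re (Csub C1 (SG m G z)).
Proof.
  intros. pose proof (Cabs_sumsq m (G z)). pose proof (Cabs_ge_Re (SG m G z)).
  unfold SG in *. unfold vnorm2 in H. simpl. lra.
Qed.
Lemma holo_comp n k D F z i : holomorphic_on n k D F -> D z -> (i < k)%nat -> difE n (fun x => F x i) z.
Proof.
  intros HF Dz Hi. destruct (HF z Dz) as [A HA]. exists (A i). intros eps He.
  destruct (HA eps He) as [d [Hd F']]. exists d; split; auto. intros h Hh Hn.
  eapply Rle_trans; [| apply (F' h Hh Hn)].
  apply (Cabs_le_norm k (fun i => Csub (Csub (F (fun j => Cadd (z j) (h j)) i) (F z i))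
                   (sumC n (fun j => Cmul (A i j) (h j)))) i Hi).
Qed.

Lemma one_minus_nz w : Cnorm2 w < 1 -> Csub C1 w <> C0.
Proof. intros H E. replace w with C1 in H by (replace w with (Csub C1 (Csub C1 w)) by field; rewrite E; field).
  unfold Cnorm2 in H; simpl in H. lra. Qed.

Lemma mul_nz x y : x <> C0 -> y <> C0 -> Cmul x y <> C0.
Proof. intros Hx Hy E. apply Cnorm2_pos in Hx. apply Cnorm2_pos in Hy.
  assert (Cnorm2 (Cmul x y) = 0) by (rewrite E; unfold Cnorm2; simpl; ring).
  rewrite Cnorm2_mul in H. assert (0 < Cnorm2 x * Cnorm2 y) by (apply Rmult_lt_0_compat; auto). lra. Qed.

Lemma psi_core s w : Csub C1 w <> C0 ->
  w = Cmul (Cinv (Cadd C1 C1)) (Cadd (Cdiv (Pm_ s w) (Csub C1 w)) (Cmul Ci (Cdiv (Pm1_ s w) (Csub C1 w)))).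
Proof.
  intro H. apply Cnorm2_pos in H.
  destruct s as [s1 s2], w as [u v]. unfold Pm_, Pm1_, Cdiv, Cinv, Cnorm2, sq, half, Cmul, Cadd, Csub, Copp, Ci, C1, RtoC in *; simpl in *.
  apply C_ext; simpl; field; lra.
Qed.

Lemma lip_core a a' b b' : Cnorm2 (Csub (Cmul (Cinv c2) (Cadd a (Cmul Ci b))) (Cmul (Cinv c2) (Cadd a' (Cmul Ci b'))))
  <= Cnorm2 (Csub a a') + Cnorm2 (Csub b b').
Proof.
  replace (Csub (Cmul (Cinv c2) (Cadd a (Cmul Ci b))) (Cmul (Cinv c2) (Cadd a' (Cmul Ci b'))))
    with (Cmul (Cinv c2) (Cadd (Csub a a') (Cmul Ci (Csub b b')))) by (field; apply c2_nz).
  rewrite Cnorm2_mul, c2_norm.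
  destruct a as [a1 a2], a' as [a1' a2'], b as [b1 b2], b' as [b1' b2'].
  unfold Cnorm2, Cmul, Cadd, Csub, Copp, Ci; simpl.
  pose proof (Rle_0_sqr (a1 - a1' + (b2 - b2'))). pose proof (Rle_0_sqr (a2 - a2' - (b1 - b1'))).
  unfold Rsqr in *. nra.
Qed.

Definition psiH (p : nat) (Z : pt) : pt := fun i =>
  if (i <? p)%nat then Z i else if (i =? p)%nat then Cmul (Cinv c2) (Cadd (Z p) (Cmul Ci (Z (S p)))) else C0.
Definition psiW (m : nat) (Z : pt) : pt := fun i => if (i <? m)%nat then Z i else C0.

Lemma G_ball n m G z : proper_holomorphic n m (ball m) G -> ball n z -> ball m (G z).
Proof. intros [_ [HM _]] Bz. apply HM; auto. Qed.

Lemma H_comp_dif n p G : proper_holomorphic n (S p) (ball (S p)) G ->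
  forall z, ball n z -> forall i, (i < S (S p))%nat -> difE n (fun x => H_map (S p) G x i) z.
Proof.
  intros HG z Bz i Hi. destruct (G_ball _ _ _ _ HG Bz) as [Gin Gn].
  assert (Dg : forall j, (j < S p)%nat -> difE n (fun x => G x j) z).
  { intros. eapply holo_comp; eauto. apply HG. }
  assert (Ds : difE n (fun x => sG p G x) z).
  { unfold sG. apply difE_sumC with (F := fun x j => sq (G x j)). intros. unfold sq. apply difE_mul; apply Dg; lia. }
  assert (Dw : difE n (fun x => G x p) z) by (apply Dg; lia).
  assert (Hw : Csub C1 (G z p) <> C0).
  { apply one_minus_nz. pose proof (Cnorm2_le_vnorm2 (S p) (G z) p ltac:(lia)). lra. }
  assert (DQ : difE n (fun x => Cmul c2 (Csub C1 (G x p))) z).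
  { apply difE_scal. apply difE_sub; auto. apply difE_const. }
  assert (NQ : Cmul c2 (Csub C1 (G z p)) <> C0) by (apply mul_nz; auto; apply c2_nz).
  assert (Dsq : difE n (fun x => sq (G x p)) z) by (unfold sq; apply difE_mul; auto).
  destruct (Nat.lt_ge_cases i p).
  - apply difE_ext with (fun x => G x i). intros; rewrite Hmap_lt; auto. apply Dg; lia.
  - destruct (Nat.eq_dec i p).
    + subst. apply difE_ext with (fun x => Cdiv (Pm_ (sG p G x) (G x p)) (Cmul c2 (Csub C1 (G x p)))).
      intros; rewrite Hmap_p; auto. apply difE_div; auto.
      unfold Pm_. apply difE_add; auto. apply difE_sub; auto. apply difE_scal; auto.
    + assert (i = S p) by lia. subst.
      apply difE_ext with (fun x => Cdiv (Pm1_ (sG p G x) (G x p)) (Cmul c2 (Csub C1 (G x p)))).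
      intros; rewrite Hmap_Sp; auto. apply difE_div; auto.
      unfold Pm1_. apply difE_scal. apply difE_sub; auto. apply difE_add; auto. apply difE_scal; auto.
Qed.

Lemma W_comp_dif n m G : proper_holomorphic n m (ball m) G ->
  forall z, ball n z -> forall i, (i < S m)%nat -> difE n (fun x => W_map m G x i) z.
Proof.
  intros HG z Bz i Hi. destruct (G_ball _ _ _ _ HG Bz) as [Gin Gn].
  assert (Dg : forall j, (j < m)%nat -> difE n (fun x => G x j) z).
  { intros. eapply holo_comp; eauto. apply HG. }
  destruct (Nat.lt_ge_cases i m).
  - apply difE_ext with (fun x => G x i). intros; rewrite Wmap_lt; auto. apply Dg; lia.
  - assert (i = m) by lia. subst.
    apply difE_ext with (fun x => Csub C1 (Csqrt (Csub C1 (SG m G x)))).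
    intros; rewrite Wmap_m; auto.
    apply difE_sub. apply difE_const. apply difE_sqrt. apply difE_sub. apply difE_const.
    unfold SG. apply difE_sumC with (F := fun x j => sq (G x j)). intros. unfold sq. apply difE_mul; apply Dg; lia.
    apply W_Re_pos; auto.
Qed.

Lemma H_proper n p G : proper_holomorphic n (S p) (ball (S p)) G ->
  proper_holomorphic n (S (S p)) (DIV (S (S p))) (H_map (S p) G).
Proof.
  intros HG. pose proof (H_comp_dif n p G HG) as HD.
  assert (Hw : forall z, ball n z -> Csub C1 (G z p) <> C0).
  { intros z Bz. destruct (G_ball _ _ _ _ HG Bz) as [Gin Gn]. apply one_minus_nz.
    pose proof (Cnorm2_le_vnorm2 (S p) (G z) p ltac:(lia)). lra. }
  split; [|split].
  - apply holo_of_comp; auto.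
  - intros z Bz. destruct (G_ball _ _ _ _ HG Bz) as [Gin Gn]. split; [|split].
    apply Hmap_inC. apply H_norm_lt2; auto. rewrite H_ivform by auto. lra.
  - apply proper_gen with (G := G) (psi := psiH p); auto.
    + apply HG.
    + intros z Bz. destruct (G_ball _ _ _ _ HG Bz) as [Gin Gn].
      apply functional_extensionality. intro i. unfold psiH.
      destruct (Nat.ltb_spec i p). rewrite Hmap_lt; auto.
      destruct (Nat.eqb_spec i p).
      * subst i. rewrite Hmap_p, Hmap_Sp, !div_c2 by auto.
        rewrite (psi_core (sG p G z) (G z p)) at 1 by auto. rewrite <- c2_sq. field. split; auto. apply c2_nz.
      * apply Gin. lia.
    + intros z Bz. apply H_ivform; auto.
    + intros Z i Hi. unfold psiH. destruct (Nat.ltb_spec i p); [lia|]. destruct (Nat.eqb_spec i p); [lia|]. auto.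
    + intros x y. unfold vnorm2. cbn [sumR].
      rewrite (sumR_ext p (fun i => Cnorm2 (Csub (psiH p x i) (psiH p y i))) (fun i => Cnorm2 (Csub (x i) (y i)))).
      2:{ intros. unfold psiH. destruct (Nat.ltb_spec i p); [auto|lia]. }
      unfold psiH at 1 2. rewrite Nat.ltb_irrefl, Nat.eqb_refl. pose proof (lip_core (x p) (y p) (x (S p)) (y (S p))). lra.
    + intros; apply Hmap_inC.
Qed.

Lemma W_proper n m G : proper_holomorphic n m (ball m) G ->
  proper_holomorphic n (S m) (DIV (S m)) (W_map m G).
Proof.
  intros HG. pose proof (W_comp_dif n m G HG) as HD.
  split; [|split].
  - apply holo_of_comp; auto.
  - intros z Bz. destruct (G_ball _ _ _ _ HG Bz) as [Gin Gn]. split; [|split].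
    apply Wmap_inC. apply W_norm_lt2; auto. rewrite W_ivform. lra.
  - apply proper_gen with (G := G) (psi := psiW m); auto.
    + apply HG.
    + intros z Bz. destruct (G_ball _ _ _ _ HG Bz) as [Gin Gn].
      apply functional_extensionality. intro i. unfold psiW.
      destruct (Nat.ltb_spec i m). rewrite Wmap_lt; auto. apply Gin; lia.
    + intros z Bz. apply W_ivform.
    + intros Z i Hi. unfold psiW. destruct (Nat.ltb_spec i m); [lia|]. auto.
    + intros x y. unfold vnorm2. cbn [sumR].
      rewrite (sumR_ext m (fun i => Cnorm2 (Csub (psiW m x i) (psiW m y i))) (fun i => Cnorm2 (Csub (x i) (y i)))).
      2:{ intros. unfold psiW. destruct (Nat.ltb_spec i m); [auto|lia]. }
      pose proof (Cnorm2_ge0 (Csub (x m) (y m))). lra.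
    + intros; apply Wmap_inC.
Qed.

Theorem mainTheorem17 (m n : nat) (G : pt -> pt) :
  (1 <= n)%nat -> (n <= m)%nat ->
  proper_holomorphic n m (ball m) G ->
  G zero_pt = zero_pt ->
  (forall z, ball n z ->
     ivform (S m) (H_map m G z) = 1 - vnorm2 m (G z) /\
     ivform (S m) (W_map m G z) = 1 - vnorm2 m (G z)) /\
  proper_holomorphic n (S m) (DIV (S m)) (H_map m G) /\
  proper_holomorphic n (S m) (DIV (S m)) (W_map m G).
Proof.
  intros Hn Hnm HG _. destruct m as [|p]. lia.
  split; [|split].
  - intros z Bz. destruct (G_ball _ _ _ _ HG Bz) as [Gin Gn]. split.
    apply H_ivform. apply one_minus_nz. pose proof (Cnorm2_le_vnorm2 (S p) (G z) p ltac:(lia)). lra.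
    apply W_ivform.
  - apply H_proper; auto.
  - apply W_proper; auto.
Qed.
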